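(* Let $C>0$ and $\epsilon\in(0,1)$. The following inclusions hold as germs at $\infty$ (i.e. each holds after removing from the left-hand set all points of modulus at most some $R>0$): (1) for $D>0$, $\epsilon'\in(\epsilon,1)$ and $\delta>0$, we have $T(U_D^{\epsilon'},\delta)\subseteq U_C^\epsilon$; (2) for $D>C$ and $\delta>0$, we have $T(U_D^\epsilon,\delta)\subseteq U_C^\epsilon$; (3) for $\nu>0$, we have $\nu\cdot U_C^\epsilon\subseteq U_{\nu C}^\epsilon$ if $\nu\le1$, and $\nu\cdot U_C^\epsilon\subseteq U_C^\epsilon$ if $\nu\ge1$; (4) $U_C^\epsilon+U_C^\epsilon\subseteq U_{C/2}^\epsilon$; (5) for any standard power domain $U$, there exists $a>0$ such that $\log\left(U_C^\epsilon\right)\cap H(a)\subseteq U\cap H(a)$.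
   Context: For $a\in\mathbb{R}$, $H(a):=\{z\in\mathbb{C}:\operatorname{Re}z>a\}$. For $C>0$ and $\epsilon\in(0,1)$, let $\phi_C^\epsilon:H(0)\to\mathbb{C}$, $\phi_C^\epsilon(z)=z+C(1+z)^\epsilon$ (principal branch of the power), and let the standard power domain be $U_C^\epsilon:=\phi_C^\epsilon(H(0))$; a standard power domain is any set of this form. For $A\subseteq\mathbb{C}$ and $\delta>0$, $T(A,\delta):=\{z\in\mathbb{C}:d(z,A)<\delta\}$. In (3), $\nu\cdot U=\{\nu z:z\in U\}$; in (4), $U+U$ is the Minkowski sum; in (5), $\log$ is the principal branch of the logarithm on $\mathbb{C}\setminus(-\infty,0]$. *)

(* Defs.v *)
From Stdlib Require Import Reals.
From Coquelicot Require Export Coquelicot.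
Open Scope R_scope.

Definition Re (z : C) : R := fst z.
Definition Im (z : C) : R := snd z.

Definition H (a : R) (z : C) : Prop := Re z > a.

(* Principal argument, with values in (-PI, PI]  (Arg 0 := 0). *)
Definition Arg (z : C) : R :=
  let x := Re z in let y := Im z in
  match Rlt_dec 0 x with
  | left _ => atan (y / x)
  | right _ =>
    match Rlt_dec x 0 with
    | left _ => match Rle_dec 0 y with
                | left _ => atan (y / x) + PI
                | right _ => atan (y / x) - PI
                end
    | right _ =>
      match Rlt_dec 0 y with
      | left _ => PI / 2
      | right _ => match Rlt_dec y 0 with
                   | left _ => - (PI / 2)
                   | right _ => 0
                   end
      end
    end
  end.

(* Principal logarithm log z = ln|z| + i Arg z (meaningful on C \ (-oo,0]). *)
Definition Clog (z : C) : C := (ln (Cmod z), Arg z).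

(* Principal power w^e = exp(e log w) = |w|^e (cos(e Arg w) + i sin(e Arg w)),
   for w <> 0 and real exponent e. *)
Definition Cpow (w : C) (e : R) : C :=
  (Rpower (Cmod w) e * cos (e * Arg w), Rpower (Cmod w) e * sin (e * Arg w)).

Definition phi (c eps : R) (z : C) : C :=
  Cplus z (Cmult (RtoC c) (Cpow (Cplus (RtoC 1) z) eps)).

Definition U (c eps : R) (w : C) : Prop :=
  exists z : C, H 0 z /\ w = phi c eps z.

Definition standard_power_domain (A : C -> Prop) : Prop :=
  exists c eps : R, 0 < c /\ 0 < eps < 1 /\ forall w, A w <-> U c eps w.

(* T(A, delta) = { z : d(z, A) < delta } = { z : exists a in A, |z - a| < delta } *)
Definition T (A : C -> Prop) (delta : R) (z : C) : Prop :=
  exists a : C, A a /\ Cmod (Cminus z a) < delta.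

Definition germ_incl (A B : C -> Prop) : Prop :=
  exists R0 : R, R0 > 0 /\ forall z, A z -> Cmod z > R0 -> B z.

Definition scale (nu : R) (A : C -> Prop) (w : C) : Prop :=
  exists z, A z /\ w = Cmult (RtoC nu) z.

Definition msum (A B : C -> Prop) (w : C) : Prop :=
  exists u v, A u /\ B v /\ w = Cplus u v.

Definition log_image (A : C -> Prop) (w : C) : Prop :=
  exists z, A z /\ w = Clog z.

Definition inter (A B : C -> Prop) (z : C) : Prop := A z /\ B z.

(* Main.v *)
Require Import Defs.
From Stdlib Require Import Reals.
From Coquelicot Require Import Coquelicot.
From Stdlib Require Import Lra Lia.
Open Scope R_scope.


Lemma Cmod_le_sum (z : C) : Cmod z <= Rabs (fst z) + Rabs (snd z).
Proof.
  destruct z as [a b]; unfold Cmod; simpl.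
  rewrite <- (sqrt_pow2 (Rabs a + Rabs b)) by (pose proof (Rabs_pos a); pose proof (Rabs_pos b); lra).
  apply sqrt_le_1_alt.
  pose proof (Rabs_pos a); pose proof (Rabs_pos b).
  rewrite <- (pow2_abs a) at 1. rewrite <- (pow2_abs b) at 1. nra.
Qed.

Lemma Rabs_fst_le (z : C) : Rabs (fst z) <= Cmod z.
Proof. destruct z as [a b]; unfold Cmod; simpl.
  rewrite <- sqrt_Rsqr_abs. apply sqrt_le_1_alt. unfold Rsqr. nra. Qed.
Lemma Rabs_snd_le (z : C) : Rabs (snd z) <= Cmod z.
Proof. destruct z as [a b]; unfold Cmod; simpl.
  rewrite <- sqrt_Rsqr_abs. apply sqrt_le_1_alt. unfold Rsqr. nra. Qed.

Definition Pw (e x y : R) := exp (e * ln (sqrt (x^2 + y^2))).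

Lemma Cpow_eq (u : C) (e : R) : 0 < fst u ->
  Defs.Cpow u e = (Pw e (fst u) (snd u) * cos (e * atan (snd u / fst u)),
              Pw e (fst u) (snd u) * sin (e * atan (snd u / fst u))).
Proof.
  intros Hx. unfold Defs.Cpow, Rpower, Pw, Arg, Defs.Re, Defs.Im, Cmod.
  destruct (Rlt_dec 0 (fst u)); [|lra]. reflexivity.
Qed.

Section Der.
Variables (e a1 a2 h1 h2 : R).
Let X t := a1 + t * h1.
Let Y t := a2 + t * h2.

Lemma der_comp1 t : 0 < X t ->
  is_derive (fun t => Pw e (X t) (Y t) * cos (e * atan (Y t / X t))) t
   (e * Pw e (X t) (Y t) / (X t ^2 + Y t ^2) *
      ((X t * h1 + Y t * h2) * cos (e * atan (Y t / X t))
       - (X t * h2 - Y t * h1) * sin (e * atan (Y t / X t)))).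
Proof.
  intros Hx. unfold Pw, X, Y in *.
  assert (Hr : 0 < (a1 + t*h1)^2 + (a2 + t*h2)^2) by (pose proof (pow_lt _ 2 Hx); pose proof (pow2_ge_0 (a2+t*h2)); lra).
  pose proof (sqrt_lt_R0 _ Hr) as Hs.
  pose proof (sqrt_sqrt ((a1 + t*h1)^2 + (a2 + t*h2)^2) (Rlt_le _ _ Hr)) as Hss.
  auto_derive.
  - repeat split; try nra. replace ((a1 + t * h1) * ((a1 + t * h1) * 1) + (a2 + t * h2) * ((a2 + t * h2) * 1)) with ((a1 + t*h1)^2 + (a2 + t*h2)^2) by ring. auto.
  - replace ((a1 + t * h1) * ((a1 + t * h1) * 1) + (a2 + t * h2) * ((a2 + t * h2) * 1)) with ((a1 + t*h1)^2 + (a2 + t*h2)^2) by ring.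
    set (Sq := sqrt ((a1 + t*h1)^2 + (a2 + t*h2)^2)) in *.
    set (P := exp _). set (c := cos _). set (s := sin _).
    clearbody Sq P c s.
    assert (E : / (1 + (a2 + t*h2) * / (a1 + t*h1) * ((a2 + t*h2) * / (a1 + t*h1) * 1)) = (a1 + t*h1)^2 / (Sq*Sq)) by (rewrite Hss; field; split; nra).
    rewrite E, <- Hss. field. split; lra.
Qed.

Lemma der_comp2 t : 0 < X t ->
  is_derive (fun t => Pw e (X t) (Y t) * sin (e * atan (Y t / X t))) t
   (e * Pw e (X t) (Y t) / (X t ^2 + Y t ^2) *
      ((X t * h1 + Y t * h2) * sin (e * atan (Y t / X t))
       + (X t * h2 - Y t * h1) * cos (e * atan (Y t / X t)))).
Proof.
  intros Hx. unfold Pw, X, Y in *.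
  assert (Hr : 0 < (a1 + t*h1)^2 + (a2 + t*h2)^2) by (pose proof (pow_lt _ 2 Hx); pose proof (pow2_ge_0 (a2+t*h2)); lra).
  pose proof (sqrt_lt_R0 _ Hr) as Hs.
  pose proof (sqrt_sqrt ((a1 + t*h1)^2 + (a2 + t*h2)^2) (Rlt_le _ _ Hr)) as Hss.
  auto_derive.
  - repeat split; try nra. replace ((a1 + t * h1) * ((a1 + t * h1) * 1) + (a2 + t * h2) * ((a2 + t * h2) * 1)) with ((a1 + t*h1)^2 + (a2 + t*h2)^2) by ring. auto.
  - replace ((a1 + t * h1) * ((a1 + t * h1) * 1) + (a2 + t * h2) * ((a2 + t * h2) * 1)) with ((a1 + t*h1)^2 + (a2 + t*h2)^2) by ring.
    set (Sq := sqrt ((a1 + t*h1)^2 + (a2 + t*h2)^2)) in *.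
    set (P := exp _). set (c := cos _). set (s := sin _).
    clearbody Sq P c s.
    assert (E : / (1 + (a2 + t*h2) * / (a1 + t*h1) * ((a2 + t*h2) * / (a1 + t*h1) * 1)) = (a1 + t*h1)^2 / (Sq*Sq)) by (rewrite Hss; field; split; nra).
    rewrite E, <- Hss. field. split; lra.
Qed.
End Der.

Lemma comp_bound1 A B c s : c^2 + s^2 = 1 -> Rabs (A*c - B*s) <= sqrt (A^2 + B^2).
Proof.
  intros Hcs. rewrite <- sqrt_Rsqr_abs. apply sqrt_le_1_alt. unfold Rsqr.
  assert (E: (A*c - B*s)*(A*c - B*s) + (A*s + B*c)^2 = (A^2+B^2)*(c^2+s^2)) by ring.
  rewrite Hcs in E. pose proof (pow2_ge_0 (A*s+B*c)); pose proof (pow2_ge_0 (A*c-B*s)); lra.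
Qed.
Lemma comp_bound2 A B c s : c^2 + s^2 = 1 -> Rabs (A*s + B*c) <= sqrt (A^2 + B^2).
Proof.
  intros Hcs. rewrite <- sqrt_Rsqr_abs. apply sqrt_le_1_alt. unfold Rsqr.
  assert (E: (A*c - B*s)^2 + (A*s + B*c)*(A*s + B*c) = (A^2+B^2)*(c^2+s^2)) by ring.
  rewrite Hcs in E. pose proof (pow2_ge_0 (A*s+B*c)); pose proof (pow2_ge_0 (A*c-B*s)); lra.
Qed.

Lemma cs1 x : cos x ^2 + sin x ^2 = 1.
Proof. pose proof (sin2_cos2 x). unfold Rsqr in H. nra. Qed.

Lemma rp_pos x e : 0 < Rpower x e.
Proof. unfold Rpower. apply exp_pos. Qed.

Lemma rp_le_self q e : 1 <= q -> e <= 1 -> Rpower q e <= q.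
Proof. intros. rewrite <- (Rpower_1 q) at 2 by lra. apply Rle_Rpower; lra. Qed.

Lemma rp_ratio m x e : 0 < m <= x -> e <= 1 -> Rpower x e / x <= Rpower m e / m.
Proof.
  intros [Hm Hx] He.
  assert (Eq : x = m * (x/m)) by (field; lra).
  assert (Hq : 1 <= x/m) by (apply (Rmult_le_reg_r m); [lra|]; unfold Rdiv; rewrite Rmult_assoc, Rinv_l; lra).
  assert (Hxx : Rpower x e = Rpower m e * Rpower (x/m) e) by (rewrite Rpower_mult_distr by lra; rewrite <- Eq; reflexivity).
  pose proof (rp_le_self (x/m) e Hq He). pose proof (rp_pos m e).
  rewrite Hxx.
  apply Rle_trans with (Rpower m e * (x/m) / x).
  { unfold Rdiv. apply Rmult_le_compat_r. left; apply Rinv_0_lt_compat; lra.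
    apply Rmult_le_compat_l; lra. }
  right. field. lra.
Qed.

Lemma dbound e x y h1 h2 m : 0 < e < 1 -> 0 < m -> m <= sqrt (x^2 + y^2) -> 0 < x ->
  forall K, Rabs K <= sqrt ((x*h1 + y*h2)^2 + (x*h2 - y*h1)^2) ->
  Rabs (e * Pw e x y / (x^2 + y^2) * K) <= e * (Rpower m e / m) * sqrt (h1^2 + h2^2).
Proof.
  intros He Hm Hms Hx K HK.
  assert (Hr : 0 < x^2 + y^2) by (pose proof (pow_lt _ 2 Hx); pose proof (pow2_ge_0 y); lra).
  set (Sq := sqrt (x^2+y^2)) in *.
  assert (Hss : Sq * Sq = x^2+y^2) by (apply sqrt_sqrt; lra).
  assert (E1 : (x*h1 + y*h2)^2 + (x*h2 - y*h1)^2 = (x^2+y^2) * (h1^2+h2^2)) by ring.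
  rewrite E1, sqrt_mult_alt in HK by lra. fold Sq in HK.
  assert (HP : Pw e x y = Rpower Sq e) by reflexivity.
  rewrite HP.
  pose proof (rp_ratio m Sq e (conj Hm Hms) ltac:(lra)) as Hrat.
  pose proof (rp_pos Sq e). pose proof (sqrt_pos (h1^2+h2^2)).
  rewrite Rabs_mult. rewrite (Rabs_pos_eq (e * Rpower Sq e / (x^2+y^2))).
  2:{ apply Rmult_le_pos; [nra| left; apply Rinv_0_lt_compat; lra]. }
  apply Rle_trans with (e * Rpower Sq e / (x ^ 2 + y ^ 2) * (Sq * sqrt (h1 ^ 2 + h2 ^ 2))).
  { apply Rmult_le_compat_l; [|lra]. apply Rmult_le_pos; [nra| left; apply Rinv_0_lt_compat; lra]. }
  rewrite <- Hss.
  assert (Hsq : 0 < Sq) by (apply sqrt_lt_R0; lra).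
  replace (e * Rpower Sq e / (Sq * Sq) * (Sq * sqrt (h1 ^ 2 + h2 ^ 2))) with
     (e * (Rpower Sq e / Sq) * sqrt (h1 ^ 2 + h2 ^ 2)) by (field; lra).
  apply Rmult_le_compat_r; [lra|]. apply Rmult_le_compat_l; lra.
Qed.

Lemma mvt01 (f df : R -> R) B :
  (forall t, 0 <= t <= 1 -> is_derive f t (df t)) ->
  (forall t, 0 <= t <= 1 -> Rabs (df t) <= B) ->
  Rabs (f 1 - f 0) <= B.
Proof.
  intros Hd Hb.
  destruct (MVT_gen f 0 1 df) as [c [Hc Heq]].
  - intros t Ht. rewrite Rmin_left, Rmax_right in Ht by lra. apply Hd; lra.
  - intros t Ht. rewrite Rmin_left, Rmax_right in Ht by lra.
    apply derivable_continuous_pt. exists (df t). apply is_derive_Reals. apply Hd; lra.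
  - rewrite Rmin_left, Rmax_right in Hc by lra.
    rewrite Heq. replace (df c * (1 - 0)) with (df c) by ring. apply Hb; lra.
Qed.

Lemma lip (e m : R) (u v : C) : 0 < e < 1 -> 0 < m ->
  (forall t, 0 <= t <= 1 -> 0 < fst u + t * (fst v - fst u) /\
      m <= Cmod (fst u + t * (fst v - fst u), snd u + t * (snd v - snd u))) ->
  Cmod (Cminus (Defs.Cpow v e) (Defs.Cpow u e)) <= 2 * (e * (Rpower m e / m)) * Cmod (Cminus v u).
Proof.
  intros He Hm Ht.
  destruct (Ht 0 ltac:(lra)) as [Hu0 _]. destruct (Ht 1 ltac:(lra)) as [Hv0 _].
  destruct u as [a1 a2], v as [b1 b2]; simpl in *.
  assert (Hu : 0 < a1) by lra. assert (Hv : 0 < b1) by lra.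
  assert (HCm : Cmod (Cminus (b1,b2) (a1,a2)) = sqrt ((b1-a1)^2 + (b2-a2)^2)) by reflexivity.
  set (B := e * (Rpower m e / m) * sqrt ((b1-a1)^2+(b2-a2)^2)).
  assert (Hmain1 : Rabs (fst (Defs.Cpow (b1,b2) e) - fst (Defs.Cpow (a1,a2) e)) <= B).
  { rewrite (Cpow_eq (b1,b2)), (Cpow_eq (a1,a2)) by auto. simpl.
    pose (f := fun t => Pw e (a1 + t*(b1-a1)) (a2 + t*(b2-a2)) * cos (e * atan ((a2 + t*(b2-a2)) / (a1 + t*(b1-a1))))).
    replace (Pw e b1 b2 * cos (e * atan (b2 / b1)) - Pw e a1 a2 * cos (e * atan (a2 / a1))) with (f 1 - f 0)
      by (unfold f; repeat (rewrite ?Rmult_1_l, ?Rmult_0_l, ?Rplus_0_r);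
          replace (a1 + (b1 - a1)) with b1 by ring; replace (a2 + (b2 - a2)) with b2 by ring; reflexivity).
    apply (mvt01 f
      (fun t => e * Pw e (a1 + t*(b1-a1)) (a2 + t*(b2-a2)) / ((a1 + t*(b1-a1)) ^2 + (a2 + t*(b2-a2)) ^2) *
      (((a1 + t*(b1-a1)) * (b1-a1) + (a2 + t*(b2-a2)) * (b2-a2)) * cos (e * atan ((a2 + t*(b2-a2)) / (a1 + t*(b1-a1))))
       - ((a1 + t*(b1-a1)) * (b2-a2) - (a2 + t*(b2-a2)) * (b1-a1)) * sin (e * atan ((a2 + t*(b2-a2)) / (a1 + t*(b1-a1))))))).
    - intros t Htt. apply der_comp1. apply Ht; auto.
    - intros t Htt. destruct (Ht t Htt) as [Hx Hmm]. apply dbound; auto.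
      apply comp_bound1. apply cs1. }
  assert (Hmain2 : Rabs (snd (Defs.Cpow (b1,b2) e) - snd (Defs.Cpow (a1,a2) e)) <= B).
  { rewrite (Cpow_eq (b1,b2)), (Cpow_eq (a1,a2)) by auto. simpl.
    pose (f := fun t => Pw e (a1 + t*(b1-a1)) (a2 + t*(b2-a2)) * sin (e * atan ((a2 + t*(b2-a2)) / (a1 + t*(b1-a1))))).
    replace (Pw e b1 b2 * sin (e * atan (b2 / b1)) - Pw e a1 a2 * sin (e * atan (a2 / a1))) with (f 1 - f 0)
      by (unfold f; repeat (rewrite ?Rmult_1_l, ?Rmult_0_l, ?Rplus_0_r);
          replace (a1 + (b1 - a1)) with b1 by ring; replace (a2 + (b2 - a2)) with b2 by ring; reflexivity).
    apply (mvt01 f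
      (fun t => e * Pw e (a1 + t*(b1-a1)) (a2 + t*(b2-a2)) / ((a1 + t*(b1-a1)) ^2 + (a2 + t*(b2-a2)) ^2) *
      (((a1 + t*(b1-a1)) * (b1-a1) + (a2 + t*(b2-a2)) * (b2-a2)) * sin (e * atan ((a2 + t*(b2-a2)) / (a1 + t*(b1-a1))))
       + ((a1 + t*(b1-a1)) * (b2-a2) - (a2 + t*(b2-a2)) * (b1-a1)) * cos (e * atan ((a2 + t*(b2-a2)) / (a1 + t*(b1-a1))))))).
    - intros t Htt. apply der_comp2. apply Ht; auto.
    - intros t Htt. destruct (Ht t Htt) as [Hx Hmm]. apply dbound; auto.
      apply comp_bound2. apply cs1. }
  rewrite HCm.
  eapply Rle_trans; [apply Cmod_le_sum|].
  simpl. simpl in Hmain1, Hmain2. unfold Rminus in *. unfold B in *. replace ((b1 + - a1) * ((b1 + - a1) * 1) + (b2 + - a2) * ((b2 + - a2) * 1)) with ((b1 + - a1)^2 + (b2 + - a2)^2) by ring. lra.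
Qed.

Lemma half_pow_small a b K : 0 <= K -> (forall n : nat, a <= b + K * (/2)^n) -> a <= b.
Proof.
  intros HK Hn. destruct (Rle_dec a b) as [|Hab]; auto. exfalso.
  assert (Hy : 0 < (a - b) / (K+1)) by (apply Rdiv_lt_0_compat; lra).
  destruct (pow_lt_1_zero (/2) ltac:(rewrite Rabs_pos_eq; lra) _ Hy) as [N HN].
  specialize (HN N (le_n N)). specialize (Hn N).
  pose proof (pow_le (/2) N ltac:(lra)) as Hp.
  rewrite Rabs_pos_eq in HN by lra.
  assert (K * (/2)^N <= K * ((a-b)/(K+1))) by (apply Rmult_le_compat_l; lra).
  assert (K * ((a-b)/(K+1)) < a - b).
  { apply (Rmult_lt_reg_r (K+1)); [lra|]. unfold Rdiv. field_simplify; lra. }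
  lra.
Qed.

Lemma lim_le (u : nat -> R) l n a b : Un_cv u l -> (forall j, Rabs (u (n + j)%nat - a) <= b) -> Rabs (l - a) <= b.
Proof.
  intros Hcv Hb. destruct (Rle_dec (Rabs (l - a)) b) as [|Hn]; auto. exfalso.
  destruct (Hcv (Rabs (l - a) - b) ltac:(lra)) as [N HN].
  specialize (HN (n + N)%nat ltac:(lia)). specialize (Hb N). unfold R_dist in HN.
  pose proof (Rabs_triang (u (n+N)%nat - a) (l - u (n+N)%nat)).
  replace (u (n + N)%nat - a + (l - u (n + N)%nat)) with (l - a) in H by ring.
  rewrite <- Rabs_Ropp in HN. replace (- (u (n + N)%nat - l)) with (l - u (n+N)%nat) in HN by ring.
  lra.
Qed.

Lemma Cminus_0_eq (a b : C) : Cminus a b = RtoC 0 -> a = b.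
Proof.
  destruct a as [a1 a2], b as [b1 b2]. unfold Cminus, Cplus, Copp. simpl. intros Heq.
  injection Heq; intros; f_equal; lra.
Qed.

Lemma fixpt (G : C -> C) (c0 : C) (rho : R) : 0 < rho ->
  (forall u, Cmod (Cminus u c0) <= rho -> Cmod (Cminus (G u) c0) <= rho) ->
  (forall u v, Cmod (Cminus u c0) <= rho -> Cmod (Cminus v c0) <= rho ->
      Cmod (Cminus (G u) (G v)) <= /2 * Cmod (Cminus u v)) ->
  exists u, Cmod (Cminus u c0) <= rho /\ G u = u.
Proof.
  intros Hrho Hmap Hcon.
  set (x := fun n => Nat.iter n G c0).
  assert (Hx0 : x 0%nat = c0) by reflexivity.
  assert (HxS : forall n, x (S n) = G (x n)) by reflexivity.
  assert (Hin : forall n, Cmod (Cminus (x n) c0) <= rho).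
  { induction n. rewrite Hx0. replace (Cminus c0 c0) with (RtoC 0) by ring. rewrite Cmod_0. lra.
    rewrite HxS. auto. }
  assert (Hcl : forall n j, Cmod (Cminus (x (n + j)%nat) (x n)) <= (/2)^n * rho).
  { induction n; intros j.
    - simpl. change (Nat.iter 0 G c0) with c0. rewrite Rmult_1_l. apply Hin.
    - replace (S n + j)%nat with (S (n + j)) by lia. rewrite !HxS.
      eapply Rle_trans. apply Hcon; auto. simpl. specialize (IHn j). lra. }
  assert (Hcomp : forall (p : C -> R), (forall z, Rabs (p z) <= Cmod z) ->
     (forall a b, p (Cminus a b) = p a - p b) ->
     Cauchy_crit (fun n => p (x n))).
  { intros p Hp Hpm eps Heps.
    assert (Hy : 0 < eps / rho) by (apply Rdiv_lt_0_compat; lra).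
    destruct (pow_lt_1_zero (/2) ltac:(rewrite Rabs_pos_eq; lra) _ Hy) as [N HN].
    exists N. intros n m Hn Hm. unfold R_dist.
    assert (Hgen : forall n j, (n >= N)%nat -> Rabs (p (x (n + j)%nat) - p (x n)) < eps).
    { intros n' j Hn'. rewrite <- Hpm. eapply Rle_lt_trans. apply Hp.
      eapply Rle_lt_trans. apply Hcl. specialize (HN n' Hn').
      rewrite Rabs_pos_eq in HN by (apply pow_le; lra).
      apply (Rmult_lt_compat_r rho) in HN; auto. unfold Rdiv in HN.
      rewrite Rmult_assoc, Rinv_l, Rmult_1_r in HN by lra. auto. }
    destruct (Nat.le_ge_cases n m) as [Hnm|Hnm].
    - replace m with (n + (m - n))%nat by lia. rewrite <- Rabs_Ropp.
      replace (- (p (x n) - p (x (n + (m - n))%nat))) with (p (x (n + (m - n))%nat) - p (x n)) by ring.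
      apply Hgen; auto.
    - replace n with (m + (n - m))%nat by lia. apply Hgen; auto. }
  destruct (Rcomplete.R_complete _ (Hcomp fst Rabs_fst_le (fun a b => eq_refl))) as [l1 Hl1].
  destruct (Rcomplete.R_complete _ (Hcomp snd Rabs_snd_le (fun a b => eq_refl))) as [l2 Hl2].
  set (L := (l1, l2) : C).
  assert (HL : forall n, Cmod (Cminus L (x n)) <= 2 * ((/2)^n * rho)).
  { intros n. eapply Rle_trans. apply Cmod_le_sum.
    assert (Rabs (l1 - fst (x n)) <= (/2)^n * rho).
    { apply (lim_le (fun k => fst (x k)) l1 n (fst (x n))); auto. intros j.
      pose proof (Rabs_fst_le (Cminus (x (n+j)%nat) (x n))). pose proof (Hcl n j). simpl in H. unfold Rminus in *. lra. }
    assert (Rabs (l2 - snd (x n)) <= (/2)^n * rho).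
    { apply (lim_le (fun k => snd (x k)) l2 n (snd (x n))); auto. intros j.
      pose proof (Rabs_snd_le (Cminus (x (n+j)%nat) (x n))). pose proof (Hcl n j). simpl in H0. unfold Rminus in *. lra. }
    simpl. unfold Rminus in *. lra. }
  assert (HLin : Cmod (Cminus L c0) <= rho).
  { apply (half_pow_small _ _ (2 * rho)). lra. intros n.
    replace (Cminus L c0) with (Cplus (Cminus L (x n)) (Cminus (x n) c0)) by ring.
    eapply Rle_trans. apply Cmod_triangle. specialize (HL n). specialize (Hin n). lra. }
  exists L. split; auto.
  apply Cminus_0_eq. apply Cmod_eq_0.
  apply Rle_antisym; [|apply Cmod_ge_0].
  apply (half_pow_small _ _ (2 * rho)). lra. intros n.
  replace (Cminus (G L) L) with (Cplus (Cminus (G L) (G (x n))) (Cminus (x (S n)) L)) by (rewrite HxS; ring).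
  eapply Rle_trans. apply Cmod_triangle.
  pose proof (Hcon L (x n) HLin (Hin n)).
  pose proof (HL n). pose proof (HL (S n)).
  rewrite <- Cmod_opp in H1. replace (- Cminus L (x (S n)))%C with (Cminus (x (S n)) L) in H1 by ring.
  simpl in H1. rewrite HxS. set (q := (/2)^n) in *. nra.
Qed.

Lemma rp_split s p : 0 < s -> s = Rpower s p * Rpower s (1 - p).
Proof. intros. rewrite <- Rpower_plus. replace (p + (1-p)) with 1 by ring. rewrite Rpower_1; auto. Qed.

Lemma L1 (al be ga p : R) : 0 < al -> 0 < p < 1 ->
  exists S, 0 < S /\ forall s, S <= s -> be + ga * Rpower s p <= al * s.
Proof.
  intros Hal Hp.
  set (g := Rabs ga).
  set (T := Rpower (2 * g / al + 1) (/ (1 - p))).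
  assert (Hg : 0 <= g) by apply Rabs_pos.
  assert (Hq : 0 < 2 * g / al + 1) by (assert (0 <= 2*g/al) by (apply Rmult_le_pos; [lra| left; apply Rinv_0_lt_compat; lra]); lra).
  exists (Rmax (Rmax T (2 * Rabs be / al)) 1). split.
  { eapply Rlt_le_trans; [|apply Rmax_r]. lra. }
  intros s Hs.
  assert (HT : T <= s) by (eapply Rle_trans; [|apply Hs]; eapply Rle_trans; [|apply Rmax_l]; apply Rmax_l).
  assert (HB : 2 * Rabs be / al <= s) by (eapply Rle_trans; [|apply Hs]; eapply Rle_trans; [|apply Rmax_l]; apply Rmax_r).
  assert (H1 : 1 <= s) by (eapply Rle_trans; [|apply Hs]; apply Rmax_r).
  assert (HTp : 0 < T) by apply rp_pos.
  assert (Hs1p : 2 * g / al + 1 <= Rpower s (1 - p)).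
  { replace (2 * g / al + 1) with (Rpower T (1 - p)).
    apply Rle_Rpower_l; lra.
    unfold T. rewrite Rpower_mult. replace (/ (1 - p) * (1 - p)) with 1 by (field; lra).
    apply Rpower_1; auto. }
  pose proof (rp_split s p ltac:(lra)) as Hsp.
  pose proof (rp_pos s p) as Hsp0.
  assert (Hbe : be <= al / 2 * s).
  { apply Rle_trans with (Rabs be). apply Rle_abs.
    apply (Rmult_le_reg_l (2 / al)). apply Rdiv_lt_0_compat; lra.
    replace (2 / al * (al / 2 * s)) with s by (field; lra).
    replace (2 / al * Rabs be) with (2 * Rabs be / al) by (field; lra). auto. }
  assert (Hga : ga * Rpower s p <= al / 2 * s).
  { apply Rle_trans with (g * Rpower s p).
    apply Rmult_le_compat_r; [lra| apply Rle_abs].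
    rewrite Hsp at 2.
    apply Rle_trans with (al / 2 * (Rpower s p * (2 * g / al))).
    right. field. lra.
    apply Rmult_le_compat_l. lra. apply Rmult_le_compat_l. lra. lra. }
  lra.
Qed.

Lemma subadd x y p : 0 < x -> 0 < y -> 0 < p < 1 ->
  Rpower (x + y) p <= Rpower x p + Rpower y p.
Proof.
  intros Hx Hy Hp.
  pose proof (rp_ratio x (x+y) p ltac:(lra) ltac:(lra)) as H1.
  pose proof (rp_ratio y (x+y) p ltac:(lra) ltac:(lra)) as H2.
  set (r := Rpower (x+y) p / (x+y)) in *.
  assert (Hr : Rpower (x+y) p = x * r + y * r) by (unfold r; field; lra).
  rewrite Hr.
  assert (x * r <= Rpower x p).
  { apply (Rmult_le_compat_l x) in H1; [|lra]. replace (x * (Rpower x p / x)) with (Rpower x p) in H1 by (field; lra). auto. }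
  assert (y * r <= Rpower y p).
  { apply (Rmult_le_compat_l y) in H2; [|lra]. replace (y * (Rpower y p / y)) with (Rpower y p) in H2 by (field; lra). auto. }
  lra.
Qed.

Lemma rp_mono x y p : 0 < x <= y -> 0 <= p -> Rpower x p <= Rpower y p.
Proof. intros. apply Rle_Rpower_l; lra. Qed.

Lemma rp_one p : Rpower 1 p = 1.
Proof. unfold Rpower. rewrite ln_1, Rmult_0_r. apply exp_0. Qed.

Lemma rp_gt1 x p : 1 < x -> 0 < p -> 1 < Rpower x p.
Proof. intros. rewrite <- (Rpower_O x) by lra. apply Rpower_lt; lra. Qed.

Lemma rp_large p K : 0 < p -> exists S, 0 < S /\ forall s, S <= s -> K <= Rpower s p.
Proof.
  intros Hp. exists (Rpower (Rabs K + 1) (/p)). split. apply rp_pos.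
  intros s Hs. apply Rle_trans with (Rabs K + 1). pose proof (Rle_abs K); lra.
  replace (Rabs K + 1) with (Rpower (Rpower (Rabs K + 1) (/p)) p).
  apply rp_mono; auto. split; [apply rp_pos|auto]. lra.
  rewrite Rpower_mult. replace (/p * p) with 1 by (field; lra). apply Rpower_1. pose proof (Rabs_pos K); lra.
Qed.

Lemma sin_lower a : 0 <= a <= PI / 2 -> a / 3 <= sin a.
Proof.
  intros Ha. pose proof PI_4.
  destruct (sin_bound a 0 ltac:(lra) ltac:(lra)) as [Hl _].
  eapply Rle_trans; [|apply Hl]. unfold sin_approx, sin_term. simpl.
  assert (a <= 2) by lra. nra.
Qed.

Lemma cos_lip x y : Rabs (cos x - cos y) <= Rabs (x - y).
Proof.
  destruct (MVT_gen cos y x (fun t => - sin t)) as [c [Hc Heq]].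
  - intros t _. auto_derive; auto. ring.
  - intros t _. apply continuity_cos.
  - rewrite Heq, Rabs_mult. pose proof (SIN_bound c).
    apply Rle_trans with (1 * Rabs (x - y)). apply Rmult_le_compat_r. apply Rabs_pos.
    rewrite Rabs_Ropp. apply Rabs_le. lra. lra.
Qed.

Lemma Cmod_Cpow u e : Cmod (Defs.Cpow u e) = Rpower (Cmod u) e.
Proof.
  unfold Defs.Cpow, Cmod at 1. simpl.
  set (P := Rpower (Cmod u) e). set (t := e * Arg u).
  replace (P * cos t * (P * cos t * 1) + P * sin t * (P * sin t * 1)) with (P ^ 2 * (cos t ^2 + sin t ^2)) by ring.
  rewrite cs1, Rmult_1_r. apply sqrt_pow2. left; apply rp_pos.



Qed.

Lemma Arg_pos u : 0 < fst u -> Arg u = atan (snd u / fst u).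
Proof. intros. unfold Arg, Defs.Re, Defs.Im. destruct (Rlt_dec 0 (fst u)); [reflexivity|lra]. Qed.

Lemma Cmod_scale c z : Cmod (Cmult (RtoC c) z) = Rabs c * Cmod z.
Proof. rewrite Cmod_mult, Cmod_R. reflexivity. Qed.

Lemma cosk e th : 0 < e < 1 -> Rabs th <= PI / 2 -> cos (e * PI / 2) <= cos (e * th).
Proof.
  intros He Hth. pose proof PI_RGT_0.
  assert (forall a, 0 <= a <= PI/2 -> cos (e * PI / 2) <= cos (e * a)).
  { intros a Ha. apply cos_decr_1; try nra. }
  destruct (Rle_dec 0 th).
  - apply H0. rewrite Rabs_pos_eq in Hth; lra.
  - rewrite <- (cos_neg (e * th)). replace (- (e * th)) with (e * (- th)) by ring. apply H0.
    rewrite Rabs_left in Hth; lra.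
Qed.

Lemma phiN0 c e a : 0 < c -> 0 < e < 1 -> U c e a ->
  exists r, 1 < r /\ c * cos (e * PI / 2) * Rpower r e <= fst a /\
    Cmod a <= r + 1 + c * Rpower r e.
Proof.
  intros Hc He [z [Hz ->]]. unfold H, Defs.Re in Hz.
  set (u := Cplus (RtoC 1) z).
  assert (Hu : fst u = 1 + fst z) by reflexivity.
  exists (Cmod u). split.
  { pose proof (Rabs_fst_le u). rewrite Rabs_pos_eq in H by lra. lra. }
  split.
  - unfold phi. fold u. simpl. unfold Defs.Cpow.
    rewrite Arg_pos by lra.
    pose proof (cosk e (atan (snd u / fst u)) He) as Hk.
    assert (Rabs (atan (snd u / fst u)) <= PI / 2).
    { pose proof (atan_bound (snd u / fst u)). apply Rabs_le. lra. }
    specialize (Hk H). pose proof (rp_pos (Cmod u) e).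
    assert (c * cos (e * PI / 2) * Rpower (Cmod u) e <= c * (Rpower (Cmod u) e * cos (e * atan (snd u / fst u)))) by
      (rewrite (Rmult_comm (Rpower _ _)), <- Rmult_assoc; apply Rmult_le_compat_r; nra).
    nra.
  - unfold phi. fold u. eapply Rle_trans. apply Cmod_triangle.
    rewrite Cmod_scale, Cmod_Cpow, Rabs_pos_eq by lra.
    assert (Cmod z <= Cmod u + 1).
    { replace z with (Cplus u (Copp (RtoC 1))) by (unfold u; ring).
      eapply Rle_trans. apply Cmod_triangle. rewrite Cmod_opp, Cmod_1. lra. }
    lra.
Qed.

Lemma cos_atan_eq X Y : 0 < X -> cos (atan (Y / X)) = X / Cmod (X, Y).
Proof.
  intros HX. rewrite cos_atan. unfold Cmod. simpl.
  assert (E : X * (X * 1) + Y * (Y * 1) = X^2 * (1 + (Y/X)²)) by (unfold Rsqr; field; lra).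
  rewrite E. rewrite sqrt_mult_alt by (apply pow2_ge_0). rewrite sqrt_pow2 by lra.
  assert (0 < sqrt (1 + (Y/X)²)) by (apply sqrt_lt_R0; pose proof (Rle_0_sqr (Y/X)); lra).
  field. split; lra.
Qed.

Lemma ReWe_bound W e : 0 < e < 1 -> 0 < fst W ->
  fst (Defs.Cpow W e) <= cos (e * PI / 2) * Rpower (Cmod W) e
     + 3 * e * Rpower (Cmod W) e * fst W / Cmod W.
Proof.
  intros He HX. destruct W as [X Y]. simpl in HX.
  unfold Defs.Cpow. simpl fst. rewrite Arg_pos by (simpl; lra). simpl.
  set (th := atan (Y / X)).
  pose proof (atan_bound (Y/X)) as Hb. fold th in Hb.
  pose proof PI_RGT_0.
  assert (HN : 0 < Cmod (X,Y)) by (pose proof (Rabs_fst_le (X,Y)); simpl in H0; rewrite Rabs_pos_eq in H0; lra).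
  set (phi0 := PI / 2 - Rabs th).
  assert (Hphi : 0 <= phi0 <= PI / 2) by (unfold phi0; pose proof (Rabs_pos th); assert (Rabs th < PI/2) by (apply Rabs_def1; lra); lra).
  assert (Hsin : sin phi0 = X / Cmod (X,Y)).
  { unfold phi0. rewrite sin_shift. rewrite <- (cos_atan_eq X Y HX). fold th.
    destruct (Rle_dec 0 th). rewrite Rabs_pos_eq; auto. rewrite Rabs_left by lra. apply cos_neg. }
  pose proof (sin_lower phi0 Hphi) as Hsl.
  assert (Hc : cos (e * th) <= cos (e * PI / 2) + e * phi0).
  { assert (cos (e * th) = cos (e * Rabs th)).
    { destruct (Rle_dec 0 th). rewrite Rabs_pos_eq; auto. rewrite Rabs_left by lra.
      rewrite <- cos_neg. f_equal; ring. }
    rewrite H0. pose proof (cos_lip (e * Rabs th) (e * PI / 2)).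
    replace (e * Rabs th - e * PI / 2) with (- (e * phi0)) in H1 by (unfold phi0; field).
    rewrite Rabs_Ropp, (Rabs_pos_eq (e * phi0)) in H1 by (apply Rmult_le_pos; lra).
    pose proof (Rle_abs (cos (e * Rabs th) - cos (e * PI / 2))). lra. }
  pose proof (rp_pos (Cmod (X,Y)) e) as HP.
  set (P := Rpower (Cmod (X, Y)) e) in *.
  assert (e * phi0 <= 3 * e * (X / Cmod (X,Y))) by nra.
  assert (P * cos (e * th) <= P * (cos (e * PI / 2) + 3 * e * (X / Cmod (X,Y)))).
  { apply Rmult_le_compat_l; lra. }
  replace (3 * e * P * X / Cmod (X, Y)) with (P * (3 * e * (X / Cmod (X,Y)))) by (field; lra).
  lra.
Qed.

Lemma Cmod_scale_pos a z : 0 <= a -> Cmod (Cmult (RtoC a) z) = a * Cmod z.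
Proof. intros. rewrite Cmod_scale, Rabs_pos_eq; auto. Qed.

Lemma seg u v W N : Cmod W = N -> Cmod (Cminus u W) <= N / 2 -> Cmod (Cminus v W) <= N / 2 ->
  0 < fst u -> 0 < fst v -> forall t, 0 <= t <= 1 ->
  0 < fst u + t * (fst v - fst u) /\
  N / 2 <= Cmod (fst u + t * (fst v - fst u), snd u + t * (snd v - snd u)).
Proof.
  intros HW Hu Hv Hu0 Hv0 t Ht. split. nra.
  set (s := Cplus (Cmult (RtoC (1 - t)) (Cminus u W)) (Cmult (RtoC t) (Cminus v W))).
  assert (Hs : Cmod s <= N / 2).
  { unfold s. eapply Rle_trans. apply Cmod_triangle.
    rewrite !Cmod_scale_pos by lra. nra. }
  assert (Ep : (fst u + t * (fst v - fst u), snd u + t * (snd v - snd u)) = Cplus W s).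
  { unfold s. destruct u, v, W. unfold Cplus, Cminus, Cmult, Copp, RtoC. simpl. f_equal; ring. }
  rewrite Ep.
  assert (Cmod W <= Cmod (Cplus W s) + Cmod (Copp s)).
  { replace W with (Cplus (Cplus W s) (Copp s)) at 1 by ring. apply Cmod_triangle. }
  rewrite Cmod_opp in H. lra.
Qed.

Lemma Score c e C' : 0 < c -> 0 < e < 1 -> c * cos (e * PI / 2) < C' ->
  exists R, 0 < R /\ forall W, R < Cmod W -> C' * Rpower (Cmod W) e - C' <= fst W ->
  exists u : C, 1 < fst u /\ Cplus u (Cmult (RtoC c) (Defs.Cpow u e)) = W.
Proof.
  intros Hc He HC'.
  set (k := cos (e * PI / 2)) in *.
  assert (Hk : 0 < k) by (unfold k; pose proof PI_RGT_0; apply cos_gt_0; nra).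
  assert (HC'0 : 0 < C') by nra.
  set (C1 := (C' + c * k) / 2).
  set (m := C1 - c * k).
  assert (Hm : 0 < m) by (unfold m, C1; lra).
  set (tau := (C' - C1) / C').
  assert (Htau : 0 < tau) by (unfold tau, C1; apply Rdiv_lt_0_compat; lra).
  assert (H1tau : 1 - tau = C1 / C') by (unfold tau; field; lra).
  set (lam := Rmin (1/2) (m / (2 * (m/2 + c)))).
  assert (Hlam : 0 < lam) by (unfold lam; apply Rmin_pos; [lra| apply Rdiv_lt_0_compat; lra]).
  destruct (L1 tau 0 (3 * c * e) e Htau He) as [S2 [HS2 HS2']].
  destruct (rp_large e ((C1 + 2) / (m / 2)) (proj1 He)) as [S3 [HS3 HS3']].
  destruct (L1 (1/2) 0 (m/2 + c) e ltac:(lra) He) as [S4 [HS4 HS4']].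
  destruct (L1 lam 0 (2 * e * c) e Hlam He) as [S5 [HS5 HS5']].
  exists (Rmax (Rmax (Rmax 2 S2) (Rmax S3 S4)) (2 * S5)). split.
  { eapply Rlt_le_trans; [|apply Rmax_l]. eapply Rlt_le_trans; [|apply Rmax_l]. eapply Rlt_le_trans; [|apply Rmax_l]. lra. }
  intros W HR HX.
  set (N := Cmod W) in *.
  assert (HN2 : 2 <= N) by (left; eapply Rle_lt_trans; [|apply HR]; eapply Rle_trans; [|apply Rmax_l]; eapply Rle_trans; [|apply Rmax_l]; apply Rmax_l).
  assert (HNS2 : S2 <= N) by (left; eapply Rle_lt_trans; [|apply HR]; eapply Rle_trans; [|apply Rmax_l]; eapply Rle_trans; [|apply Rmax_l]; apply Rmax_r).
  assert (HNS3 : S3 <= N) by (left; eapply Rle_lt_trans; [|apply HR]; eapply Rle_trans; [|apply Rmax_l]; eapply Rle_trans; [|apply Rmax_r]; apply Rmax_l).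
  assert (HNS4 : S4 <= N) by (left; eapply Rle_lt_trans; [|apply HR]; eapply Rle_trans; [|apply Rmax_l]; eapply Rle_trans; [|apply Rmax_r]; apply Rmax_r).
  assert (HNS5 : S5 <= N / 2) by (assert (2 * S5 < N) by (eapply Rle_lt_trans; [|apply HR]; apply Rmax_r); lra).
  specialize (HS2' N HNS2). specialize (HS3' N HNS3). specialize (HS4' N HNS4). specialize (HS5' (N/2) HNS5).
  set (NE := Rpower N e) in *.
  assert (HNE1 : 1 < NE) by (apply rp_gt1; lra).
  assert (HXp : 0 < fst W) by nra.
  set (P := Defs.Cpow W e).
  set (u0 := Cminus W (Cmult (RtoC c) P)).
  set (rho := m / 2 * NE).
  assert (Hrho : 0 < rho) by (unfold rho; nra).
  assert (Hu0 : m * NE - C1 <= fst u0).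
  { pose proof (ReWe_bound W e He HXp) as Hb. fold N NE P k in Hb.
    assert (Hu0e : fst u0 = fst W - c * fst P) by (unfold u0; simpl; ring).
    rewrite Hu0e.
    assert (Hx1 : c * (3 * e * NE * fst W / N) <= tau * fst W).
    { replace (c * (3 * e * NE * fst W / N)) with (fst W * ((3 * c * e * NE) / N)) by (field; lra).
      rewrite Rmult_comm. apply Rmult_le_compat_r. lra.
      apply (Rmult_le_reg_r N). lra. unfold Rdiv. rewrite Rmult_assoc, Rinv_l, Rmult_1_r by lra. lra. }
    assert (Hx2 : C1 * NE - C1 <= (1 - tau) * fst W).
    { rewrite H1tau. apply (Rmult_le_reg_l C'). lra.
      replace (C' * (C1 / C' * fst W)) with (C1 * fst W) by (field; lra).
      assert (0 < C1) by (unfold C1; pose proof (Rmult_lt_0_compat c k Hc Hk); lra). assert (C1 * (C' * NE - C') <= C1 * fst W) by (apply Rmult_le_compat_l; lra). replace (C' * (C1 * NE - C1)) with (C1 * (C' * NE - C')) by ring. lra. }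
    unfold m. nra. }
  assert (Hball : forall u, Cmod (Cminus u u0) <= rho -> 1 < fst u /\ Cmod (Cminus u W) <= N / 2).
  { intros u Hu. split.
    - pose proof (Rabs_fst_le (Cminus u u0)). change (fst (Cminus u u0)) with (fst u + - fst u0) in H. unfold Rminus in *.
      assert (fst u + - fst u0 >= - rho) by (pose proof (Rle_abs (-(fst u + - fst u0))) as Hq; rewrite Rabs_Ropp in Hq; lra).
      unfold rho in *.
      assert ((C1 + 2) <= m / 2 * NE).
      { apply (Rmult_le_compat_l (m/2)) in HS3'; [|lra].
        replace (m / 2 * ((C1 + 2) / (m / 2))) with (C1 + 2) in HS3' by (field; lra). auto. }
      lra.
    - replace (Cminus u W) with (Cplus (Cminus u u0) (Copp (Cmult (RtoC c) P))) by (unfold u0; ring).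
      eapply Rle_trans. apply Cmod_triangle. rewrite Cmod_opp, Cmod_scale_pos by lra. unfold P. rewrite Cmod_Cpow.
      fold N NE. unfold rho in *. lra. }
  set (Lam := 2 * (e * (Rpower (N/2) e / (N/2)))).
  assert (HLam : c * Lam <= lam).
  { unfold Lam. apply (Rmult_le_reg_r (N/2)). lra.
    replace (c * (2 * (e * (Rpower (N / 2) e / (N / 2)))) * (N / 2)) with (0 + 2 * e * c * Rpower (N/2) e) by (field; lra).
    auto. }
  assert (HLam0 : 0 <= Lam) by (unfold Lam; pose proof (rp_pos (N/2) e); apply Rmult_le_pos; [lra|]; apply Rmult_le_pos; [lra|]; left; apply Rdiv_lt_0_compat; lra).
  assert (HWball : Cmod (Cminus W W) <= N / 2) by (replace (Cminus W W) with (RtoC 0) by ring; rewrite Cmod_0; lra).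
  assert (Hlip : forall u v, Cmod (Cminus u W) <= N / 2 -> Cmod (Cminus v W) <= N / 2 -> 0 < fst u -> 0 < fst v ->
     Cmod (Cminus (Defs.Cpow v e) (Defs.Cpow u e)) <= Lam * Cmod (Cminus v u)).
  { intros u v Hu Hv Hu0' Hv0'. apply lip. auto. lra. apply (seg u v W N); auto. }
  set (G := fun u => Cminus W (Cmult (RtoC c) (Defs.Cpow u e))).
  destruct (fixpt G u0 rho Hrho) as [us [Hus HG]].
  - intros u Hu. destruct (Hball u Hu) as [Hu1 Hu2].
    replace (Cminus (G u) u0) with (Cmult (RtoC c) (Cminus P (Defs.Cpow u e))) by (unfold G, u0; ring).
    rewrite Cmod_scale_pos by lra.
    pose proof (Hlip u W Hu2 HWball ltac:(lra) HXp) as Hl.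
    assert (Cmod (Cminus W u) <= (m/2 + c) * NE).
    { rewrite <- Cmod_opp. replace (Copp (Cminus W u)) with (Cminus u W) by ring.
      replace (Cminus u W) with (Cplus (Cminus u u0) (Copp (Cmult (RtoC c) P))) by (unfold u0; ring).
      eapply Rle_trans. apply Cmod_triangle. rewrite Cmod_opp, Cmod_scale_pos by lra. unfold P. rewrite Cmod_Cpow.
      fold N NE. unfold rho in Hu. lra. }
    assert (lam <= m / (2 * (m/2 + c))) by apply Rmin_r.
    assert (c * Cmod (Cminus P (Defs.Cpow u e)) <= c * Lam * ((m/2 + c) * NE)).
    { rewrite Rmult_assoc. apply Rmult_le_compat_l. lra. fold P in Hl.
      eapply Rle_trans. apply Hl. apply Rmult_le_compat_l; auto. }
    assert (c * Lam * ((m/2 + c) * NE) <= m / (2 * (m/2 + c)) * ((m/2 + c) * NE)).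
    { apply Rmult_le_compat_r. nra. lra. }
    replace (m / (2 * (m / 2 + c)) * ((m / 2 + c) * NE)) with rho in H2 by (unfold rho; field; lra).
    lra.
  - intros u v Hu Hv. destruct (Hball u Hu) as [Hu1 Hu2]. destruct (Hball v Hv) as [Hv1 Hv2].
    replace (Cminus (G u) (G v)) with (Cmult (RtoC c) (Cminus (Defs.Cpow v e) (Defs.Cpow u e))) by (unfold G; ring).
    rewrite Cmod_scale_pos by lra.
    pose proof (Hlip u v Hu2 Hv2 ltac:(lra) ltac:(lra)) as Hl.
    assert (lam <= 1/2) by apply Rmin_l.
    rewrite <- (Cmod_opp (Cminus v u)) in Hl. replace (Copp (Cminus v u)) with (Cminus u v) in Hl by ring.
    pose proof (Cmod_ge_0 (Cminus u v)).
    apply Rle_trans with (c * (Lam * Cmod (Cminus u v))). apply Rmult_le_compat_l; lra.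
    rewrite <- Rmult_assoc. apply Rmult_le_compat_r; lra.
  - exists us. split. apply Hball; auto.
    unfold G in HG. rewrite <- HG at 1. ring.
Qed.

Lemma Slem c e C' : 0 < c -> 0 < e < 1 -> c * cos (e * PI / 2) < C' ->
  exists R, 0 < R /\ forall w : C, R < Cmod w -> C' * Rpower (Cmod w) e <= fst w -> U c e w.
Proof.
  intros Hc He HC'.
  assert (Hk : 0 < cos (e * PI / 2)) by (pose proof PI_RGT_0; apply cos_gt_0; nra).
  assert (HC'0 : 0 < C') by nra.
  destruct (Score c e C' Hc He HC') as [R [HR HRW]].
  exists (R + 1). split. lra.
  intros w Hw Hre.
  set (W := Cplus w (RtoC 1)).
  assert (HW1 : Cmod W <= Cmod w + 1) by (unfold W; eapply Rle_trans; [apply Cmod_triangle|]; rewrite Cmod_1; lra).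
  assert (HW2 : Cmod w <= Cmod W + 1).
  { replace w with (Cplus W (Copp (RtoC 1))) at 1 by (unfold W; ring).
    eapply Rle_trans; [apply Cmod_triangle|]. rewrite Cmod_opp, Cmod_1. lra. }
  assert (HWR : R < Cmod W) by lra.
  assert (HWe : Rpower (Cmod W) e <= Rpower (Cmod w) e + 1).
  { eapply Rle_trans. apply rp_mono. split; [lra|apply HW1]. lra.
    rewrite <- (rp_one e) at 2. apply subadd; lra. }
  destruct (HRW W HWR) as [u [Hu Heq]].
  { assert (fst W = fst w + 1) by (unfold W; simpl; ring). nra. }
  exists (Cminus u (RtoC 1)). split.
  - unfold H, Defs.Re. simpl. lra.
  - unfold phi. replace (Cplus (RtoC 1) (Cminus u (RtoC 1))) with u by ring.
    replace w with (Cminus W (RtoC 1)) by (unfold W; ring). rewrite <- Heq. ring.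
Qed.

Lemma kpos e : 0 < e < 1 -> 0 < cos (e * PI / 2).
Proof. intros. pose proof PI_RGT_0. apply cos_gt_0; nra. Qed.

Lemma finish c e C' (P : C -> Prop) : 0 < c -> 0 < e < 1 -> c * cos (e*PI/2) < C' ->
  (exists R1, forall w, P w -> R1 < Cmod w -> C' * Rpower (Cmod w) e <= fst w) ->
  germ_incl P (U c e).
Proof.
  intros Hc He HC [R1 HR1].
  destruct (Slem c e C' Hc He HC) as [R [HR HRS]].
  exists (Rmax (Rmax R R1) 1). split. eapply Rlt_le_trans; [|apply Rmax_r]; lra.
  intros w Hw Hm.
  assert (R < Cmod w) by (eapply Rle_lt_trans; [|apply Hm]; eapply Rle_trans; [|apply Rmax_l]; apply Rmax_l).
  assert (R1 < Cmod w) by (eapply Rle_lt_trans; [|apply Hm]; eapply Rle_trans; [|apply Rmax_l]; apply Rmax_r).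
  apply HRS; auto.
Qed.

Lemma dom p q al be ga : 0 < al -> 0 < p < 1 -> 0 < q ->
  exists R, 0 < R /\ forall r, R <= r -> be + ga * Rpower (Rpower r q) p <= al * Rpower r q.
Proof.
  intros Hal Hp Hq.
  destruct (L1 al be ga p Hal Hp) as [S [HS HS']].
  destruct (rp_large q S Hq) as [R' [HR' HR'']].
  exists R'. split; auto.
Qed.

Lemma pow_bound x r y e : 0 < x -> 0 < r -> 0 < y -> x <= r + y -> 0 < e < 1 ->
  Rpower x e <= Rpower r e + Rpower y e.
Proof. intros. apply Rle_trans with (Rpower (r + y) e). apply rp_mono; [split; lra|lra]. apply subadd; lra. Qed.

Lemma rp_s_ge1 r e : 1 < r -> 0 < e -> 1 <= Rpower r e.
Proof. intros. left. apply rp_gt1; auto. Qed.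

Lemma fst_lower (w a : C) : fst a - Cmod (Cminus w a) <= fst w.
Proof. pose proof (Rabs_fst_le (Cminus w a)). change (fst (Cminus w a)) with (fst w + - fst a) in H.
  pose proof (Rle_abs (- (fst w + - fst a))). rewrite Rabs_Ropp in H0. lra. Qed.

Lemma Cmod_near (w a : C) : Cmod w <= Cmod a + Cmod (Cminus w a).
Proof. replace w with (Cplus a (Cminus w a)) at 1 by ring. apply Cmod_triangle. Qed.

Lemma part2 c e d delta : 0 < c -> 0 < e < 1 -> c < d -> 0 < delta ->
  germ_incl (T (U d e) delta) (U c e).
Proof.
  intros Hc He Hcd Hd.
  pose proof (kpos e He) as Hk. set (k := cos (e * PI / 2)) in *.
  set (C' := (c + d) / 2 * k).
  apply (finish c e C'); auto. fold k. unfold C'. pose proof (Rmult_lt_0_compat (d-c) k ltac:(lra) Hk). nra.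
  set (K := Rpower (1 + delta + d) e).
  destruct (dom e e ((d - c) / 2 * k) delta (C' * K) ltac:(nra) He (proj1 He)) as [Rd [HRd HRd']].
  set (M := 2 + delta + d).
  exists (M * Rmax Rd 1). intros w [a [Ha Hwa]] HRw.
  destruct (phiN0 d e a ltac:(lra) He Ha) as [r [Hr [Hre Hcm]]]. fold k in Hre.
  set (s := Rpower r e) in *.
  assert (Hs1 : 1 <= s) by (apply rp_s_ge1; lra).
  assert (Hsr : s <= r) by (apply rp_le_self; lra).
  pose proof (fst_lower w a). pose proof (Cmod_near w a).
  assert (Hwm : Cmod w <= M * r) by (unfold M; nra).
  assert (HMpos : 0 < M) by (unfold M; lra).
  assert (HrR : Rd <= r).
  { assert (M * Rmax Rd 1 < M * r) by lra. apply Rmult_lt_reg_l in H1; auto.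
    pose proof (Rmax_l Rd 1). lra. }
  specialize (HRd' r HrR). fold s in HRd'.
  assert (HR1 : 0 < M * Rmax Rd 1) by (apply Rmult_lt_0_compat; auto; eapply Rlt_le_trans; [|apply Rmax_r]; lra).
  assert (Hpw : Rpower (Cmod w) e <= s + K * Rpower s e).
  { eapply Rle_trans. apply (pow_bound (Cmod w) r (1 + delta + d * s)); try lra. nra.
    fold s. apply Rplus_le_compat_l. unfold K. rewrite Rpower_mult_distr by lra.
    apply rp_mono. split. nra. nra. lra. }
  assert (HC'0 : 0 < C') by (unfold C'; nra).
  apply Rle_trans with (C' * (s + K * Rpower s e)). apply Rmult_le_compat_l; lra.
  unfold C' in *. nra.
Qed.

Lemma part1 c e d e' delta : 0 < c -> 0 < e < 1 -> 0 < d -> e < e' < 1 -> 0 < delta ->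
  germ_incl (T (U d e') delta) (U c e).
Proof.
  intros Hc He Hd He' Hdl.
  pose proof (kpos e He) as Hk. set (k := cos (e * PI / 2)) in *.
  assert (He'' : 0 < e' < 1) by lra.
  pose proof (kpos e' He'') as Hk'. set (k' := cos (e' * PI / 2)) in *.
  set (C' := 2 * c * k).
  apply (finish c e C'); auto. fold k. unfold C'. pose proof (Rmult_lt_0_compat c k Hc Hk). nra.
  set (M := 2 + delta + d).
  set (K := Rpower M e).
  assert (Hp : 0 < e / e' < 1).
  { split. apply Rdiv_lt_0_compat; lra. apply (Rmult_lt_reg_r e'). lra. unfold Rdiv. rewrite Rmult_assoc, Rinv_l; lra. }
  destruct (dom (e / e') e' (d * k') delta (C' * K) ltac:(nra) Hp ltac:(lra)) as [Rd [HRd HRd']].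
  exists (M * Rmax Rd 1). intros w [a [Ha Hwa]] HRw.
  destruct (phiN0 d e' a ltac:(lra) He'' Ha) as [r [Hr [Hre Hcm]]]. fold k' in Hre.
  set (s := Rpower r e') in *.
  assert (Hs1 : 1 <= s) by (apply rp_s_ge1; lra).
  assert (Hsr : s <= r) by (apply rp_le_self; lra).
  pose proof (fst_lower w a). pose proof (Cmod_near w a).
  assert (Hwm : Cmod w <= M * r) by (unfold M; nra).
  assert (HMpos : 0 < M) by (unfold M; lra).
  assert (HrR : Rd <= r).
  { assert (M * Rmax Rd 1 < M * r) by lra. apply Rmult_lt_reg_l in H1; auto.
    pose proof (Rmax_l Rd 1). lra. }
  specialize (HRd' r HrR). fold s in HRd'.
  assert (HR1 : 0 < M * Rmax Rd 1) by (apply Rmult_lt_0_compat; auto; eapply Rlt_le_trans; [|apply Rmax_r]; lra).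
  assert (Hse : Rpower s (e / e') = Rpower r e).
  { unfold s. rewrite Rpower_mult. f_equal. field. lra. }
  rewrite Hse in HRd'.
  assert (Hpw : Rpower (Cmod w) e <= K * Rpower r e).
  { unfold K. rewrite Rpower_mult_distr by lra. apply rp_mono. split; lra. lra. }
  assert (HC'0 : 0 < C') by (unfold C'; pose proof (Rmult_lt_0_compat c k Hc Hk); lra).
  apply Rle_trans with (C' * (K * Rpower r e)). apply Rmult_le_compat_l; lra.
  rewrite <- Rmult_assoc. lra.
Qed.

Lemma part3gen c e nu ct : 0 < c -> 0 < e < 1 -> 0 < nu -> 0 < ct ->
  ct * cos (e * PI / 2) < nu * c * cos (e * PI / 2) / Rpower nu e ->
  germ_incl (scale nu (U c e)) (U ct e).
Proof.
  intros Hc He Hnu Hct Hlt.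
  pose proof (kpos e He) as Hk. set (k := cos (e * PI / 2)) in *.
  pose proof (rp_pos nu e) as Hne. set (ne := Rpower nu e) in *.
  set (A := nu * c * k / ne) in *.
  set (C' := (ct * k + A) / 2).
  apply (finish ct e C'); auto. fold k. unfold C'. lra.
  set (K := Rpower (1 + c) e).
  assert (HK : 0 < K) by apply rp_pos.
  destruct (dom e e (ne * (A - C')) 0 (C' * ne * K) ltac:(unfold C'; nra) He (proj1 He)) as [Rd [HRd HRd']].
  set (M := nu * (2 + c)).
  assert (HMpos : 0 < M) by (unfold M; nra).
  exists (M * Rmax Rd 1). intros w [a [Ha ->]] HRw.
  destruct (phiN0 c e a Hc He Ha) as [r [Hr [Hre Hcm]]]. fold k in Hre.
  set (s := Rpower r e) in *.
  assert (Hs1 : 1 <= s) by (apply rp_s_ge1; lra).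
  assert (Hsr : s <= r) by (apply rp_le_self; lra).
  rewrite Cmod_scale_pos in * by lra.
  assert (Hfst : fst (Cmult (RtoC nu) a) = nu * fst a) by (simpl; ring).
  rewrite Hfst.
  assert (Hwm : nu * Cmod a <= M * r).
  { assert (c * s <= c * r) by (apply Rmult_le_compat_l; lra). assert (Cmod a <= (2 + c) * r) by lra. unfold M. rewrite Rmult_assoc. apply Rmult_le_compat_l; lra. }
  assert (HrR : Rd <= r).
  { assert (M * Rmax Rd 1 < M * r) by lra. apply Rmult_lt_reg_l in H; auto.
    pose proof (Rmax_l Rd 1). lra. }
  specialize (HRd' r HrR). fold s in HRd'.
  assert (HR1 : 0 < M * Rmax Rd 1) by (apply Rmult_lt_0_compat; auto; eapply Rlt_le_trans; [|apply Rmax_r]; lra).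
  assert (Hca : 0 < Cmod a) by nra.
  assert (Hpw : Rpower (nu * Cmod a) e <= ne * (s + K * Rpower s e)).
  { rewrite <- Rpower_mult_distr by lra. fold ne. apply Rmult_le_compat_l. lra.
    eapply Rle_trans. apply (pow_bound (Cmod a) r (1 + c * s)); try lra. nra.
    fold s. apply Rplus_le_compat_l. unfold K. rewrite Rpower_mult_distr by lra.
    apply rp_mono. split. nra. nra. lra. }
  assert (HC'0 : 0 < C') by (unfold C'; nra).
  apply Rle_trans with (C' * (ne * (s + K * Rpower s e))). apply Rmult_le_compat_l; lra.
  assert (HA : A * ne = nu * c * k) by (unfold A; field; lra).
  assert (nu * (c * k * s) <= nu * fst a) by (apply Rmult_le_compat_l; lra).
  nra.
Qed.

Lemma rp_lt1 nu e : 0 < nu < 1 -> 0 < e -> Rpower nu e < 1.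
Proof.
  intros. unfold Rpower. rewrite <- exp_0. apply exp_increasing.
  assert (ln nu < 0) by (rewrite <- ln_1; apply ln_increasing; lra). nra.
Qed.

Lemma scale1 c e : germ_incl (scale 1 (U c e)) (U c e).
Proof.
  exists 1. split. lra. intros w [a [Ha ->]] _.
  replace (Cmult (RtoC 1) a) with a by ring. auto.
Qed.

Lemma part3 c e nu : 0 < c -> 0 < e < 1 -> 0 < nu ->
  (nu <= 1 -> germ_incl (scale nu (U c e)) (U (nu * c) e)) /\
  (1 <= nu -> germ_incl (scale nu (U c e)) (U c e)).
Proof.
  intros Hc He Hnu. pose proof (kpos e He) as Hk.
  pose proof (rp_pos nu e) as Hne.
  split; intros Hn.
  - destruct (Req_dec nu 1) as [->|Hn1].
    + rewrite Rmult_1_l. apply scale1.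
    + apply part3gen; auto. nra.
      pose proof (rp_lt1 nu e ltac:(lra) ltac:(lra)).
      set (k := cos (e * PI / 2)) in *. set (ne := Rpower nu e) in *.
      apply (Rmult_lt_reg_r ne). lra. match goal with |- _ < ?X * ne => replace (X * ne) with (nu * c * k) by (field; lra) end.
      pose proof (Rmult_lt_0_compat (nu * c) k ltac:(nra) Hk). nra.
  - destruct (Req_dec nu 1) as [->|Hn1].
    + apply scale1.
    + apply part3gen; auto.
      assert (Rpower nu e < nu) by (rewrite <- (Rpower_1 nu) at 2 by lra; apply Rpower_lt; lra).
      set (k := cos (e * PI / 2)) in *. set (ne := Rpower nu e) in *.
      apply (Rmult_lt_reg_r ne). lra. match goal with |- _ < ?X * ne => replace (X * ne) with (nu * c * k) by (field; lra) end.
      pose proof (Rmult_lt_0_compat c k Hc Hk). nra.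
Qed.

Lemma r_from_s r e S : 1 < r -> 0 < e -> Rpower r e <= S -> r <= Rpower S (/ e).
Proof.
  intros Hr He Hs.
  replace r with (Rpower (Rpower r e) (/ e)) at 1.
  apply rp_mono. split. apply rp_pos. auto. left; apply Rinv_0_lt_compat; lra.
  rewrite Rpower_mult. replace (e * / e) with 1 by (field; lra). apply Rpower_1; lra.
Qed.

Lemma part4 c e : 0 < c -> 0 < e < 1 -> germ_incl (msum (U c e) (U c e)) (U (c / 2) e).
Proof.
  intros Hc He.
  pose proof (kpos e He) as Hk. set (k := cos (e * PI / 2)) in *.
  pose proof (Rmult_lt_0_compat c k Hc Hk) as Hck.
  set (C' := 3 / 4 * (c * k)).
  apply (finish (c/2) e C'); auto. lra. fold k. unfold C'. lra.
  set (K := Rpower (2 + c) e).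
  assert (HK : 0 < K) by apply rp_pos.
  destruct (L1 (c * k / 4) 0 (C' * K) e ltac:(lra) He) as [S [HS HS']].
  set (Sm := Rmax S 1).
  assert (HSm : 1 <= Sm) by apply Rmax_r.
  exists (2 * Rpower Sm (/ e) + 2 + c * Sm). intros w [a [b [Ha [Hb ->]]]] HRw.
  destruct (phiN0 c e a Hc He Ha) as [r1 [Hr1 [Hre1 Hcm1]]].
  destruct (phiN0 c e b Hc He Hb) as [r2 [Hr2 [Hre2 Hcm2]]]. fold k in Hre1, Hre2.
  set (s1 := Rpower r1 e) in *. set (s2 := Rpower r2 e) in *.
  assert (Hs1 : 1 <= s1) by (apply rp_s_ge1; lra).
  assert (Hs2 : 1 <= s2) by (apply rp_s_ge1; lra).
  set (s := s1 + s2).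
  assert (Hw : Cmod (Cplus a b) <= (r1 + r2) + (2 + c * s)).
  { eapply Rle_trans. apply Cmod_triangle. unfold s. lra. }
  assert (HsS : S <= s).
  { destruct (Rle_dec S s) as [|Hn]; auto. exfalso.
    assert (s <= Sm) by (unfold Sm; pose proof (Rmax_l S 1); lra).
    assert (r1 <= Rpower Sm (/ e)) by (apply r_from_s; try lra; change (Rpower r1 e) with s1; unfold s in *; lra).
    assert (r2 <= Rpower Sm (/ e)) by (apply r_from_s; try lra; change (Rpower r2 e) with s2; unfold s in *; lra).
    assert (c * s <= c * Sm) by (apply Rmult_le_compat_l; lra).
    lra. }
  specialize (HS' s HsS).
  assert (Hfst : fst (Cplus a b) = fst a + fst b) by reflexivity.
  rewrite Hfst.
  assert (Hpos : 0 < Cmod (Cplus a b)).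
  { eapply Rle_lt_trans; [|apply HRw]. pose proof (rp_pos Sm (/e)). nra. }
  assert (Hpw : Rpower (Cmod (Cplus a b)) e <= s + K * Rpower s e).
  { eapply Rle_trans. apply (pow_bound _ (r1 + r2) (2 + c * s)); try lra.
    assert (0 <= c * s) by (apply Rmult_le_pos; unfold s; lra). lra.
    apply Rplus_le_compat. unfold s, s1, s2. apply subadd; lra.
    unfold K. rewrite Rpower_mult_distr by lra.
    apply rp_mono. split. unfold s; nra. unfold s; nra. lra. }
  assert (HC'0 : 0 < C') by (unfold C'; lra).
  apply Rle_trans with (C' * (s + K * Rpower s e)). apply Rmult_le_compat_l; lra.
  assert (c * k * s1 + c * k * s2 <= fst a + fst b) by lra.
  unfold C' in *. unfold s in *. nra.
Qed.

Lemma Arg_bound z : Rabs (Arg z) <= 2 * PI.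
Proof.
  pose proof PI_RGT_0. unfold Arg.
  pose proof (atan_bound (Defs.Im z / Defs.Re z)).
  destruct (Rlt_dec 0 (Defs.Re z)); [apply Rabs_le; lra|].
  destruct (Rlt_dec (Defs.Re z) 0).
  - destruct (Rle_dec 0 (Defs.Im z)); apply Rabs_le; lra.
  - destruct (Rlt_dec 0 (Defs.Im z)); [apply Rabs_le; lra|].
    destruct (Rlt_dec (Defs.Im z) 0); apply Rabs_le; lra.
Qed.

Lemma part5 c e (A : C -> Prop) : standard_power_domain A ->
  exists a : R, 0 < a /\ germ_incl (inter (log_image (U c e)) (H a)) (inter A (H a)).
Proof.
  intros [c2 [e2 [Hc2 [He2 HA]]]].
  pose proof (kpos e2 He2) as Hk. set (k := cos (e2 * PI / 2)) in *.
  set (C' := 2 * c2 * k).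
  assert (HC' : c2 * k < C') by (unfold C'; pose proof (Rmult_lt_0_compat c2 k Hc2 Hk); lra).
  destruct (Slem c2 e2 C' Hc2 He2 HC') as [RS [HRS HRS']].
  destruct (L1 1 (C' * Rpower 8 e2) C' e2 ltac:(lra) He2) as [S [HS HS']].
  set (a := Rmax (Rmax RS S) 1 + 1).
  assert (Ha1 : RS < a) by (unfold a; pose proof (Rmax_l (Rmax RS S) 1); pose proof (Rmax_l RS S); lra).
  assert (Ha2 : S < a) by (unfold a; pose proof (Rmax_l (Rmax RS S) 1); pose proof (Rmax_r RS S); lra).
  assert (Ha3 : 1 < a) by (unfold a; pose proof (Rmax_r (Rmax RS S) 1); lra).
  exists a. split. lra.
  exists 1. split. lra.
  intros w [[z [Hz ->]] Hw] _. split; auto.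
  unfold H, Defs.Re in Hw.
  apply HA. set (x := fst (Clog z)) in *.
  assert (Hsnd : Rabs (snd (Clog z)) <= 8) by (pose proof (Arg_bound z); pose proof PI_4; simpl; lra).
  assert (Hcm : Cmod (Clog z) <= x + 8).
  { eapply Rle_trans. apply Cmod_le_sum. fold x. rewrite Rabs_pos_eq by lra. lra. }
  assert (Hcx : x <= Cmod (Clog z)) by (pose proof (Rabs_fst_le (Clog z)); fold x in H; pose proof (Rle_abs x); lra).
  apply HRS'. lra.
  assert (Rpower (Cmod (Clog z)) e2 <= Rpower x e2 + Rpower 8 e2) by (apply pow_bound; lra).
  specialize (HS' x ltac:(lra)).
  assert (HC'0 : 0 < C') by (unfold C'; pose proof (Rmult_lt_0_compat c2 k Hc2 Hk); lra).
  apply Rle_trans with (C' * (Rpower x e2 + Rpower 8 e2)). apply Rmult_le_compat_l; lra.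
  fold x. lra.
Qed.

Theorem lemma3p2 (c eps : R) (hc : 0 < c) (heps : 0 < eps < 1) :
  (* (1) *)
  (forall (d eps' delta : R), 0 < d -> eps < eps' < 1 -> 0 < delta ->
     germ_incl (T (U d eps') delta) (U c eps)) /\
  (* (2) *)
  (forall (d delta : R), c < d -> 0 < delta ->
     germ_incl (T (U d eps) delta) (U c eps)) /\
  (* (3) *)
  (forall nu : R, 0 < nu ->
     (nu <= 1 -> germ_incl (scale nu (U c eps)) (U (nu * c) eps)) /\
     (1 <= nu -> germ_incl (scale nu (U c eps)) (U c eps))) /\
  (* (4) *)
  germ_incl (msum (U c eps) (U c eps)) (U (c / 2) eps) /\
  (* (5) *)
  (forall A : C -> Prop, standard_power_domain A ->
     exists a : R, 0 < a /\
       germ_incl (inter (log_image (U c eps)) (H a)) (inter A (H a))).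
Proof.
  split; [intros d eps' delta Hd He' Hdl; apply part1; auto|].
  split; [intros d delta Hcd Hdl; apply part2; auto|].
  split; [intros nu Hnu; apply part3; auto|].
  split; [apply part4; auto|].
  intros A HA; apply part5; auto.
Qed.
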